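(* Let $k$ be a positive integer with $4\mid k$. Then $S_3(k;4)\ge 4k-5$.
   Context: Let $k,r$ be positive integers with $r\mid k$. A solution to $\mathcal{E}$ is a $k$-tuple $(x_1,\dots,x_k)$ of positive integers (not necessarily distinct) with $\sum_{i=1}^{k-1}x_i=x_k$; it lies in $[1,n]$ if all $x_i\in\{1,\dots,n\}$. Given a coloring $\chi$ of $[1,n]$ with colors in $\{0,1,\dots,r-1\}$ (viewed as integers), a solution is $r$-zero-sum if $\sum_{i=1}^k\chi(x_i)\equiv 0\pmod r$. $S_3(k;r)$ denotes the least positive integer $n$ such that every coloring $\chi:[1,n]\to\{0,1,\dots,r-1\}$ admits an $r$-zero-sum solution to $\mathcal{E}$ in $[1,n]$. *)

(* Defs.v *)
From mathcomp Require Import all_boot.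
Set Implicit Arguments. Unset Strict Implicit. Unset Printing Implicit Defensive.

(* A k-tuple (x_1,...,x_k) is encoded as x : nat -> nat, using the entries
   x 0, ..., x (k-1) (0-based indexing). *)
Definition is_solution_in (k n : nat) (x : nat -> nat) : Prop :=
  (forall i, i < k -> 1 <= x i <= n) /\
  \sum_(i < k.-1) x i = x k.-1.

Definition is_coloring (r n : nat) (chi : nat -> nat) : Prop :=
  forall m, 1 <= m <= n -> chi m < r.

Definition zero_sum (k r : nat) (chi : nat -> nat) (x : nat -> nat) : Prop :=
  (\sum_(i < k) chi (x i)) %% r = 0.

Definition zs_property (k r n : nat) : Prop :=
  forall chi, is_coloring r n chi ->
    exists x, is_solution_in k n x /\ zero_sum k r chi x.

(* "S_3(k;r) >= m": S_3(k;r) is the least positive n with zs_property k r n,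
   so S_3(k;r) >= m means every positive n with the property is >= m
   (vacuously true if no such n exists, i.e. S_3 = infinity). *)
Definition S3_ge (k r m : nat) : Prop :=
  forall n, 0 < n -> zs_property k r n -> m <= n.

(* Main.v *)
Require Import Defs.
From mathcomp Require Import all_boot.
From mathcomp Require Import zify.

Definition gg (k x : nat) : nat :=
  if x < k then 0 else if x <= 3*k-4 then (if odd x then 0 else 1)
  else (if odd x then 3 else 1).

Definition chc (k x : nat) : nat := (x + 3 + gg k x) %% 4.

Lemma term1 k x : 1 <= x -> 1 + (k-1) * (k <= x) <= x.
Proof. by case: (leqP k x) => H /=; lia. Qed.

Lemma term2 k x : 1 <= x -> 1 + (3*k-4) * (3*k-3 <= x) <= x.
Proof. by case: (leqP (3*k-3) x) => H /=; lia. Qed.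

Lemma term3 k x : gg k x <= (k <= x) + 3 * (3*k-3 <= x).
Proof.
rewrite /gg; case: (ltnP x k) => H1 //=.
case: (leqP x (3*k-4)) => H2; case: (leqP (3*k-3) x) => H3 /=;
  case: (odd x); lia.
Qed.

Lemma split_last (F : nat -> nat) k : 0 < k ->
  \sum_(i < k) F i = \sum_(i < k.-1) F i + F k.-1.
Proof. by case: k => // k _; rewrite big_ord_recr. Qed.

Theorem theorem6 (k : nat) (hk : 0 < k) (h4 : 4 %| k) :
  S3_ge k 4 (4 * k - 5).
Proof.
move=> n n0 P.
rewrite leqNgt; apply/negP => Hn.
have [x [[Hx Hsum] Hz]] := P (chc k) (fun m _ => ltn_pmod _ (erefl true : 0 < 4)).
move: h4 => /dvdnP [q Hq].
have q1 : 0 < q by lia.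
move: Hz; rewrite /zero_sum.
set X := x k.-1.
set G := \sum_(i < k.-1) gg k (x i).
set B := \sum_(i < k.-1) (k <= x i : nat).
set H := \sum_(i < k.-1) (3*k-3 <= x i : nat).
have HXn : X <= n by have := Hx k.-1; lia.
have Hxi : forall i : 'I_k.-1, 1 <= x i.
  by move=> i; have := Hx i; have := ltn_ord i; lia.
have E1 : \sum_(i < k.-1) (1 + (k-1) * (k <= x i)) <= X.
  by rewrite /X -Hsum; apply: leq_sum => i _; apply: term1.
have E2 : \sum_(i < k.-1) (1 + (3*k-3-1) * (3*k-3 <= x i)) <= X.
  rewrite /X -Hsum; apply: leq_sum => i _.
  have -> : 3*k-3-1 = 3*k-4 by lia.
  by apply: term2.
have E3 : G <= B + 3 * H.
  rewrite /G /B /H big_distrr /= -big_split /=.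
  by apply: leq_sum => i _; apply: term3.
rewrite big_split /= sum1_card card_ord -big_distrr /= in E1.
rewrite big_split /= sum1_card card_ord -big_distrr /= in E2.
rewrite -/B in E1; rewrite -/H in E2.
rewrite (split_last (fun i => chc k (x i))) // => Hz.
have Hz2 : (\sum_(i<k.-1) (x i + 3 + gg k (x i)) + (X + 3 + gg k X)) %% 4 = 0.
  by rewrite -modnDm -modn_summ modnDml; exact: Hz.
move: Hz2; rewrite !big_split /= sum_nat_const card_ord Hsum -/X -/G.
clearbody X G B H.
have HH : H = 0 by move: E2; case: (H) => // h; nia.
have HB : B <= 2 by move: E1; case: (leqP B 2) => // h; nia.
have HB2 : B = 2 -> 3*k-3 <= X by move=> e; move: E1; rewrite e; lia.
have HB1 : B = 1 -> 2*k-2 <= X by move=> e; move: E1; rewrite e; lia.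
have HB0 : k-1 <= X by move: E1; case: (B); lia.
clear E1 E2.
rewrite /gg; case: (ltnP X k) => C1; case: (leqP X (3*k-4)) => C2;
  have := odd_double_half X; case: (odd X) => /= C3; lia.
Qed.
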